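(* Let $(S,K,I)$ be an active split graph with $\alpha=|I|$ and $\omega=|K|$, and suppose $\Phi(S)$ is simple and connected. Then: (1) $\omega\le\alpha$; (2) $S$ and $\Phi(S)$ have the same clique number; (3) if $\Phi(S)$ is complete, then $\deg(S)=\binom{\alpha}{2}$; (4) if $\Phi(S)$ is not complete, then $\left\lceil \tfrac{\alpha}{2}(\omega-1)\right\rceil\le \deg(S)<\binom{\alpha}{2}$.
   Context: All graphs are finite and simple. A split graph is a graph $S$ whose vertex set is a disjoint union $V(S)=K\,\dot\cup\,I$ with $K$ a clique and $I$ an independent set; $(K,I)$ is called a bipartition of $S$, and $(S,K,I)$ denotes $S$ together with this fixed bipartition. A 2-switch in a graph $G$ is performed on four distinct vertices $a,b,c,d$ with $ab,cd\in E(G)$ and $ac,bd\notin E(G)$: it deletes $ab,cd$ and adds $ac,bd$; $a,b,c,d$ are said to participate in it. A vertex is active in $G$ if it participates in some 2-switch on $G$; $G$ is active if all its vertices are active. For a split graph $(S,K,I)$ and distinct $u,v\in I$, $\sigma_{uv}(S)$ is the number of induced subgraphs of $S$ isomorphic to $P_4$ containing both $u$ and $v$. The factor graph $\Phi(S)$ is the loopless multigraph with vertex set $I$ having exactly $\sigma_{uv}(S)$ parallel edges between $u$ and $v$; it is simple if $\sigma_{uv}(S)\in\{0,1\}$ for all $u,v$. Graph notions (connected, complete, clique number, etc.) applied to $\Phi(S)$ refer to its underlying simple graph, in which $u\sim v$ iff $\sigma_{uv}(S)\ge1$. $\deg(S)$ denotes the number of induced subgraphs of $S$ isomorphic to $P_4$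 (equivalently, the number of 2-switches on $S$, or the number of edges of $\Phi(S)$ counted with multiplicity). *)

(* Defs.v *)
(* A finite simple graph on a finType T is a symmetric,
   irreflexive relation e : rel T; V(S) = T. *)
From mathcomp Require Import all_boot all_order.
Set Implicit Arguments. Unset Strict Implicit. Unset Printing Implicit Defensive.

Section SplitGraphs.
Variable T : finType.
Variable e : rel T.

Definition simple_graph : Prop := symmetric e /\ irreflexive e.

Definition split_bipartition (K I : {set T}) : Prop :=
  [/\ K :&: I = set0, K :|: I = [set: T],
      {in K &, forall x y, x != y -> e x y} &
      {in I &, forall x y, ~~ e x y}].

Definition two_switch (a b c d : T) : bool :=
  [&& uniq [:: a; b; c; d], e a b, e c d, ~~ e a c & ~~ e b d].

Definition active_vertex (v : T) : bool :=
  [exists a, exists b, exists c, exists d,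
     two_switch a b c d && (v \in [:: a; b; c; d])].

Definition active_graph : Prop := forall v : T, active_vertex v.

Definition induces_P4 (X : {set T}) : bool :=
  [exists a, exists b, exists c, exists d,
    [&& uniq [:: a; b; c; d], X == [set a; b; c; d],
        e a b, e b c, e c d, ~~ e a c, ~~ e a d & ~~ e b d]].

Definition degS : nat := #|[set X : {set T} | induces_P4 X]|.

Definition sigma (u v : T) : nat :=
  #|[set X : {set T} | [&& induces_P4 X, u \in X & v \in X]]|.

(* Underlying simple graph of the factor graph Phi(S), vertex set I. *)
Definition phi_adj (I : {set T}) : rel T :=
  fun u v => [&& u \in I, v \in I, u != v & 0 < sigma u v].

Definition phi_simple (I : {set T}) : Prop :=
  {in I &, forall u v, u != v -> sigma u v <= 1}.

Definition phi_connected (I : {set T}) : Prop :=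
  {in I &, forall u v, connect (phi_adj I) u v}.

Definition phi_complete (I : {set T}) : Prop :=
  {in I &, forall u v, u != v -> phi_adj I u v}.

Definition is_clique (r : rel T) (A : {set T}) : bool :=
  [forall x in A, forall y in A, (x != y) ==> r x y].

Definition clique_number (r : rel T) (V : {set T}) : nat :=
  \max_(A : {set T} | (A \subset V) && is_clique r A) #|A|.

End SplitGraphs.

(* Main.v *)
Require Import Defs.
From mathcomp Require Import all_boot all_order zify.
Set Implicit Arguments. Unset Strict Implicit. Unset Printing Implicit Defensive.

Section Main.
Variable T : finType.
Variable e : rel T.
Variables K I : {set T}.
Hypothesis esy : symmetric e.
Hypothesis eirr : irreflexive e.
Hypothesis KI0 : K :&: I = set0.
Hypothesis KIT : K :|: I = [set: T].
Hypothesis Kcl : {in K &, forall x y, x != y -> e x y}.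
Hypothesis Iind : {in I &, forall x y, ~~ e x y}.

Lemma inIE x : (x \in I) = (x \notin K).
Proof.
apply/idP/idP.
  move=> xI; apply/negP=> xK.
  have : x \in K :&: I by rewrite inE xK xI.
  by rewrite KI0 inE.
move=> xK; have : x \in K :|: I by rewrite KIT inE.
by rewrite inE (negbTE xK).
Qed.

Lemma eKK x y : e x y -> (x \in K) || (y \in K).
Proof.
move=> xy; case: (boolP (x \in K)) => //= xK; case: (boolP (y \in K)) => //= yK.
rewrite -inIE in xK; rewrite -inIE in yK.
by move: (Iind xK yK); rewrite xy.
Qed.

Lemma nKK x y : ~~ e x y -> x != y -> (x \notin K) || (y \notin K).
Proof.
move=> nxy xy; case: (boolP (x \in K)) => //= xK; case: (boolP (y \in K)) => //= yK.
by move: (Kcl xK yK xy); rewrite (negbTE nxy).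
Qed.

Lemma P4_struct X : induces_P4 e X -> exists a b c d,
  [/\ [/\ a \in I, d \in I, b \in K & c \in K],
      [/\ e a b, e d c, ~~ e a c, ~~ e d b & e b c] & X = [set a; b; c; d]].
Proof.
case/existsP => a /existsP [b /existsP [c /existsP [d]]].
move=> /andP[U /andP[/eqP HX /andP[ab /andP[bc /andP[cd /andP[nac /andP[nad nbd]]]]]]].
move: U; rewrite /= !inE !negb_or => /and4P[/and3P[ab' ac' ad'] /andP[bc' bd'] cd' _].
have H1 := eKK ab; have H2 := eKK bc; have H3 := eKK cd.
have H4 := nKK nac ac'; have H5 := nKK nad ad'; have H6 := nKK nbd bd'.
exists a, b, c, d; rewrite !inIE.
have dc : e d c by rewrite esy.
have ndb : ~~ e d b by rewrite esy.
move: (a \in K) (b \in K) (c \in K) (d \in K) H1 H2 H3 H4 H5 H6 => [] [] [] [] //= *.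

Qed.


Lemma active_struct z : active_vertex e z -> exists u v x y,
  [/\ [/\ u \in I, v \in I, x \in K & y \in K],
      [/\ e u x, ~~ e u y, e v y & ~~ e v x] & z \in [:: u; v; x; y]].
Proof.
case/existsP => a /existsP [b /existsP [c /existsP [d]]].
move=> /andP[/and5P[U ab cd nac nbd] zin].
move: U; rewrite /= !inE !negb_or => /and4P[/and3P[ab' ac' ad'] /andP[bc' bd'] cd' _].
have H1 := eKK ab; have H3 := eKK cd.
have H4 := nKK nac ac'; have H6 := nKK nbd bd'.
case: (boolP (a \in K)) => aK.
  have cK : c \notin K by move: H4; rewrite aK.
  have dK : d \in K by move: H3; rewrite (negbTE cK).
  have bK : b \notin K by move: H6; rewrite dK orbF.
  exists b, c, a, d; rewrite !inIE; split => //.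
    by rewrite esy ab; split => //; rewrite esy.
  by move: zin; rewrite !inE => /or4P[]/eqP->; rewrite eqxx ?orbT.
have bK : b \in K by move: H1; rewrite (negbTE aK).
have dK : d \notin K by move: H6; rewrite bK.
have cK : c \in K by move: H3; rewrite (negbTE dK) orbF.
exists a, d, b, c; rewrite !inIE; split => //.
  by split => //; rewrite esy.
by move: zin; rewrite !inE => /or4P[]/eqP->; rewrite eqxx ?orbT.
Qed.


Lemma neqIK u x : u \in I -> x \in K -> u != x.
Proof. by move=> uI xK; apply/eqP=> ux; move: uI; rewrite inIE ux xK. Qed.

Lemma P4_of u v x y : u \in I -> v \in I -> x \in K -> y \in K ->
  e u x -> e v y -> ~~ e u y -> ~~ e v x -> induces_P4 e [set u; x; y; v].
Proof.
move=> uI vI xK yK ux vy nuy nvx.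
have uv : u != v by apply/eqP=> E; move: nvx; rewrite -E ux.
have xy : x != y by apply/eqP=> E; move: nuy; rewrite -E ux.
apply/existsP; exists u; apply/existsP; exists x; apply/existsP; exists y.
apply/existsP; exists v.
rewrite eqxx ux (Kcl xK yK xy) nuy (Iind uI vI) /= andbT.
rewrite esy vy esy nvx /= !inE !negb_or uv xy (neqIK uI xK) (neqIK uI yK).
by rewrite eq_sym (neqIK vI xK) eq_sym (neqIK vI yK).
Qed.

Definition N u := [set x in K | e u x].

Hypothesis simp : phi_simple e I.

Lemma Puniq u v x x' y : u \in I -> v \in I ->
  x \in N u -> x \notin N v -> x' \in N u -> x' \notin N v ->
  y \in N v -> y \notin N u -> x = x'.
Proof.
move=> uI vI; rewrite !inE !negb_and.
move=> /andP[xK ux] nvx /andP[x'K ux'] nvx' /andP[yK vy] nuy.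
rewrite xK /= in nvx; rewrite x'K /= in nvx'; rewrite yK /= in nuy.
case: (eqVneq x x') => // xx'.
have uv : u != v by apply/eqP=> E; move: nvx; rewrite -E ux.
have := simp uI vI uv; rewrite /sigma.
set S := [set X | _].
have H1 : [set u; x; y; v] \in S.
  by rewrite inE (P4_of uI vI xK yK) // !inE !eqxx /= ?orbT.
have H2 : [set u; x'; y; v] \in S.
  by rewrite inE (P4_of uI vI x'K yK) // !inE !eqxx /= ?orbT.
have H12 : [set u; x; y; v] != [set u; x'; y; v].
  apply/eqP=> E; have : x' \in [set u; x; y; v] by rewrite E !inE eqxx orbT.
  rewrite !inE -!orbA => /or4P[] /eqP E'.
  - by move: (neqIK uI x'K); rewrite E' eqxx.
  - by move: xx'; rewrite E' eqxx.
  - by move: nuy; rewrite -E' ux'.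
  - by move: (neqIK vI x'K); rewrite E' eqxx.
have : [set [set u; x; y; v]; [set u; x'; y; v]] \subset S.
  by apply/subsetP=> X /set2P[]->.
move/subset_leq_card; rewrite cards2 H12 => h1 h2.
by have := leq_trans h1 h2.
Qed.

Lemma Nex u v : #|N u| = #|N v| -> N u != N v -> exists x, x \in N u /\ x \notin N v.
Proof.
move=> c neq; case: (boolP (N u \subset N v)) => [sub | /subsetPn [x h1 h2]].
  by move: neq; rewrite eqEcard sub c leqnn.
by exists x.
Qed.

Lemma diff1 p q b c : p \in I -> q \in I -> b \in N p -> b \notin N q ->
  c \in N q -> c \notin N p -> N p :\: N q = [set b].
Proof.
move=> pI qI bp bq cq cp; apply/setP => z; rewrite !inE.
apply/idP/idP.
  move=> /andP[zq zp]; apply/eqP.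
  by apply: (Puniq pI qI _ _ bp bq cq cp); rewrite inE.
by move/eqP->; rewrite -!(in_set (fun z => (z \in K) && e _ z)) -/(N p) -/(N q) bp bq.
Qed.

Lemma card_pair p q b c : p \in I -> q \in I -> b \in N p -> b \notin N q ->
  c \in N q -> c \notin N p -> #|N p| = #|N q|.
Proof.
move=> pI qI bp bq cq cp.
rewrite -(cardsID (N q) (N p)) -(cardsID (N p) (N q)) setIC.
by rewrite (diff1 pI qI bp bq cq cp) (diff1 qI pI cq cp bp bq) !cards1.
Qed.


Lemma adj_card u v : phi_adj e I u v -> #|N u| = #|N v|.
Proof.
move=> /and4P[uI vI uv /card_gt0P[X]]; rewrite inE => /and3P[P4X uX vX].
have [a [b [c [d [[aI dI bK cK] [ab dc nac ndb bc] EX]]]]] := P4_struct P4X.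
have key : #|N a| = #|N d|.
  apply: (card_pair aI dI (b := b) (c := c)); rewrite !inE ?negb_and ?bK ?cK //=.
move: uX vX uv uI vI; rewrite EX !inE -!orbA.
move=> /or4P[]/eqP Eu /or4P[]/eqP Ev; subst u v => //; rewrite ?eqxx //;
 try (by move=> _ /(neqIK)/(_ bK); rewrite eqxx);
 try (by move=> _ /(neqIK)/(_ cK); rewrite eqxx);
 try (by move=> _ _ /(neqIK)/(_ bK); rewrite eqxx);
 try (by move=> _ _ /(neqIK)/(_ cK); rewrite eqxx).
Qed.

Lemma conn_card u v : connect (phi_adj e I) u v -> #|N u| = #|N v|.
Proof.
move/connectP => [p]; elim: p u => [|w p IH] u /=; first by move=> _ ->.
by move=> /andP[uw pw] E; rewrite (adj_card uw); apply: IH pw E.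
Qed.

Hypothesis conn : phi_connected e I.

Lemma Ncard u v : u \in I -> v \in I -> #|N u| = #|N v|.
Proof. by move=> uI vI; apply: conn_card; apply: conn. Qed.


Lemma PU u v x x' : u \in I -> v \in I ->
  x \in N u -> x \notin N v -> x' \in N u -> x' \notin N v -> x = x'.
Proof.
move=> uI vI xu xv x'u x'v.
have neq : N v != N u by apply/eqP=> E; move: xv; rewrite E xu.
have [y [yv yu]] := Nex (Ncard vI uI) neq.
exact: (Puniq uI vI xu xv x'u x'v yv yu).
Qed.

Hypothesis act : active_graph e.

Lemma actK x : x \in K ->
  (exists u, u \in I /\ x \in N u) /\ (exists v, v \in I /\ x \notin N v).
Proof.
move=> xK; have [u [v [x0 [y0 [[uI vI x0K y0K] [ux ny nvy nvx] xin]]]]] := active_struct (act x).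
move: xin; rewrite !inE => /or4P[]/eqP E; subst x.
- by move: (neqIK uI xK); rewrite eqxx.
- by move: (neqIK vI xK); rewrite eqxx.
- by split; [exists u | exists v]; rewrite !inE ?negb_and ?xK.
- by split; [exists v | exists u]; rewrite !inE ?negb_and ?xK.
Qed.

Lemma actI u : u \in I -> exists y, y \in K /\ y \notin N u.
Proof.
move=> uI; have [u0 [v [x0 [y0 [[u0I vI x0K y0K] [ux ny nvy nvx] xin]]]]] := active_struct (act u).
move: xin; rewrite !inE => /or4P[]/eqP E; subst u.
- by exists y0; rewrite !inE negb_and ny orbT.
- by exists x0; rewrite !inE negb_and nvx orbT.
- by move: (neqIK uI x0K); rewrite eqxx.
- by move: (neqIK uI y0K); rewrite eqxx.
Qed.

Lemma NsubK u : N u \subset K.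
Proof. by apply/subsetP=> x; rewrite inE => /andP[]. Qed.

Lemma no_both u : u \in I -> 1 < #|N u| -> 1 < #|K :\: N u| -> False.
Proof.
move=> uI /card_gt1P [c1 [c2 [c1u c2u c12]]] /card_gt1P [p [q [pin qin pq]]].
move: pin qin; rewrite !in_setD => /andP[pu pK] /andP[qu qK].
have [[v [vI pv]] _] := actK pK.
have [[w [wI qw]] _] := actK qK.
have neqv : N u != N v by apply/eqP=> E; move: pu; rewrite E pv.
have neqw : N u != N w by apply/eqP=> E; move: qu; rewrite E qw.
have [a [au av]] := Nex (Ncard uI vI) neqv.
have [b [bu bw]] := Nex (Ncard uI wI) neqw.
have PUV z : z \in N u -> z \notin N v -> z = a by move=> ??; apply: (PU uI vI).
have PUW z : z \in N u -> z \notin N w -> z = b by move=> ??; apply: (PU uI wI).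
have qv : q \notin N v.
  apply/negP=> qv; have := PU vI uI qv qu pv pu; move/eqP; by rewrite eq_sym (negbTE pq).
have pw : p \notin N w.
  apply/negP=> pw; have := PU wI uI pw pu qw qu; move/eqP; by rewrite (negbTE pq).
have ab : a = b.
  case: (eqVneq a b) => // ab.
  have bv : b \in N v.
    case: (boolP (b \in N v)) => // bv; move: (PUV b bu bv) ab => ->; by rewrite eqxx.
  have := PU vI wI bv bw pv pw => E; by move: pu; rewrite -E bu.
have [c [cu ca]] : exists c, c \in N u /\ c != a.
  case: (eqVneq c1 a) => [E|]; last by exists c1.
  by exists c2; split => //; rewrite -E eq_sym.
have cv : c \in N v by case: (boolP (c \in N v)) => // cv; move: (PUV c cu cv) ca => ->; rewrite eqxx.
have cw : c \in N w by case: (boolP (c \in N w)) => // cw; move: (PUW c cu cw) ca => ->; rewrite ab eqxx.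
have cK : c \in K by move: cu; rewrite inE => /andP[].
have [_ [t [tI ct]]] := actK cK.
have pt : p \in N t.
  case: (boolP (p \in N t)) => // pt; have := PU vI tI pv pt cv ct => E.
  by move: pu; rewrite E cu.
have qt : q \in N t.
  case: (boolP (q \in N t)) => // qt; have := PU wI tI qw qt cw ct => E.
  by move: qu; rewrite E cu.
have sub : (N u :\ c) :|: [set p; q] \subset N t.
  apply/subsetP=> z; rewrite in_setU in_setD1 in_set2 => /orP[/andP[zc zu]|/orP[]/eqP->] //.
  case: (boolP (z \in N t)) => // zt; have := PU uI tI zu zt cu ct => E.
  by move: zc; rewrite E eqxx.
have dis : (N u :\ c) :&: [set p; q] = set0.
  apply/setP=> z; rewrite in_setI in_setD1 in_set2 in_set0.
  apply/negP => /andP[/andP[_ zu] /orP[]/eqP E]; [move: pu | move: qu]; by rewrite -E zu.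
move/subset_leq_card: sub; rewrite cardsU dis cards0 cards2 pq subn0.
rewrite (Ncard tI uI) [in X in _ <= X](cardsD1 c) cu /=.
by rewrite [1 + _]addnC leq_add2l.
Qed.


Lemma Npos u : u \in I -> 0 < #|N u|.
Proof.
move=> uI; have [u0 [v [x0 [y0 [[u0I vI x0K y0K] [ux ny nvy nvx] xin]]]]] := active_struct (act u).
apply/card_gt0P.
move: xin; rewrite !inE => /or4P[]/eqP E; subst u.
- by exists x0; rewrite !inE x0K.
- by exists y0; rewrite !inE y0K.
- by move: (neqIK uI x0K); rewrite eqxx.
- by move: (neqIK uI y0K); rewrite eqxx.
Qed.

Lemma pick1 (A : {set T}) d : #|A| = 1 -> A = [set odflt d [pick x in A]].
Proof.
move/eqP/cards1P=> [x ->]; case: pickP => [y /set1P -> //|].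
by move/(_ x); rewrite inE eqxx.
Qed.

Lemma dich : (forall u, u \in I -> #|N u| <= 1) \/ (forall u, u \in I -> #|K :\: N u| <= 1).
Proof.
case: (boolP [forall u in I, #|N u| <= 1]) => [/forall_inP H|/forall_inPn [u0 u0I H0]].
  by left=> u uI; apply: H.
right=> u uI; rewrite leqNgt; apply/negP => H; apply: (no_both uI) H.
by rewrite (Ncard uI u0I) ltnNge.
Qed.

Lemma cls : exists g : T -> T,
  [/\ forall u, u \in I -> g u \in K,
      forall u v, u \in I -> v \in I -> (N u == N v) = (g u == g v) &
      forall x, x \in K -> exists u, u \in I /\ g u = x].
Proof.
case: dich => H.
  pose g u := odflt u [pick x in N u].
  have Eg u : u \in I -> N u = [set g u].
    move=> uI; apply: pick1; apply/eqP; rewrite eqn_leq H //; exact: Npos.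
  exists g; split.
  - by move=> u uI; apply: (subsetP (NsubK u)); rewrite Eg // set11.
  - move=> u v uI vI; rewrite (Eg u uI) (Eg v vI).
    by apply/eqP/eqP => [/set1_inj|->].
  - move=> x xK; have [[u [uI xu]] _] := actK xK.
    by exists u; split => //; move: xu; rewrite (Eg u uI) => /set1P.
pose g u := odflt u [pick x in K :\: N u].
have Eg u : u \in I -> K :\: N u = [set g u].
  move=> uI; apply: pick1; apply/eqP; rewrite eqn_leq H //.
  have [y [yK yu]] := actI uI; apply/card_gt0P; exists y; by rewrite in_setD yu.
have EN u : u \in I -> N u = K :\ g u.
  move=> uI; apply/setP=> z; rewrite in_setD1; have := Eg u uI.
  move/setP/(_ z); rewrite in_setD in_set1.
  case: (boolP (z \in N u)) => zu /=.
    by rewrite (subsetP (NsubK u) _ zu) andbT => <-.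
  by move=> ->; case: (z == g u).
exists g; split.
- by move=> u uI; have := Eg u uI; move/setP/(_ (g u)); rewrite in_set1 eqxx in_setD => /andP[].
- move=> u v uI vI; apply/eqP/eqP => [E|E].
    by apply: set1_inj; rewrite -(Eg u uI) -(Eg v vI) E.
  by rewrite (EN u uI) (EN v vI) E.
- move=> x xK; have [_ [v [vI xv]]] := actK xK.
  exists v; split => //; have := Eg v vI; move/setP/(_ x); rewrite in_setD xv xK in_set1.
  by case: eqP => [->|].
Qed.


Definition R (P : {set T}) : {set T} :=
  P :|: \bigcup_(a in P) \bigcup_(b in P) (N a :\: N b).

Lemma R_pair u v x y : u \in I -> v \in I -> x \in N u -> x \notin N v ->
  y \in N v -> y \notin N u -> R [set u; v] = [set u; x; y; v].
Proof.
move=> uI vI xu xv yv yu; apply/setP => z; rewrite /R in_setU; apply/idP/idP.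
  case/orP => [/set2P[]->| /bigcupP[a aP /bigcupP[b bP]]]; try by rewrite !inE eqxx ?orbT.
  rewrite in_setD => /andP[zb za].
  move: aP bP za zb => /set2P[]-> /set2P[]-> za zb.
  - by move: zb; rewrite za.
  - by rewrite (PU uI vI za zb xu xv) !inE eqxx ?orbT.
  - by rewrite (PU vI uI za zb yv yu) !inE eqxx ?orbT.
  - by move: zb; rewrite za.
move=> H; have : [|| z == u, z == x, z == y | z == v] by move: H; rewrite !inE -!orbA.
case/or4P => /eqP->; rewrite ?set21 ?set22 //; apply/orP; right.
  by apply/bigcupP; exists u; rewrite ?set21 //; apply/bigcupP; exists v; rewrite ?set22 // in_setD xu xv.
by apply/bigcupP; exists v; rewrite ?set22 //; apply/bigcupP; exists u; rewrite ?set21 // in_setD yu yv.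
Qed.

Lemma NK x u : x \in N u -> x \in K.
Proof. by rewrite inE => /andP[]. Qed.

Lemma RI u v x y : u \in I -> v \in I -> x \in K -> y \in K ->
  [set u; x; y; v] :&: I = [set u; v].
Proof.
move=> uI vI xK yK; apply/setP => z; rewrite !inE.
case: (eqVneq z x) => [->|zx].
  have xI : (x \in I) = false by rewrite inIE xK.
  rewrite xI andbF; symmetry; apply/negbTE; rewrite negb_or.
  by apply/andP; split; rewrite eq_sym; apply: neqIK.
case: (eqVneq z y) => [->|zy].
  have yI : (y \in I) = false by rewrite inIE yK.
  rewrite yI andbF; symmetry; apply/negbTE; rewrite negb_or.
  by apply/andP; split; rewrite eq_sym; apply: neqIK.
rewrite /= orbF; case: (eqVneq z u) => [->|] /=; first by rewrite uI.
by case: (eqVneq z v) => [->|] //=; rewrite vI.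
Qed.

Lemma F1 X : induces_P4 e X -> exists u v,
  [/\ u \in I, v \in I, N u != N v, X :&: I = [set u; v] & X = R [set u; v]].
Proof.
move=> P4X; have [a [b [c [d [[aI dI bK cK] [ab dc nac ndb bc] EX]]]]] := P4_struct P4X.
have ba : b \in N a by rewrite inE bK.
have bd : b \notin N d by rewrite inE bK.
have cd : c \in N d by rewrite inE cK.
have ca : c \notin N a by rewrite inE cK.
exists a, d; split => //.
- by apply/eqP=> E; move: bd; rewrite -E ba.
- by rewrite EX RI.
- by rewrite (R_pair aI dI ba bd cd ca).
Qed.

Lemma F2 u v : u \in I -> v \in I -> N u != N v ->
  induces_P4 e (R [set u; v]) /\ R [set u; v] :&: I = [set u; v].
Proof.
move=> uI vI neq.
have [x [xu xv]] := Nex (Ncard uI vI) neq.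
have [y [yv yu]] := Nex (Ncard vI uI) (contra_neq (@esym _ _ _) neq).
rewrite (R_pair uI vI xu xv yv yu) (RI uI vI (NK xu) (NK yv)); split => //.
have xK := NK xu; have yK := NK yv.
apply: P4_of => //; move: xu xv yu yv; rewrite !inE xK yK /= => *; by [].
Qed.


Lemma adjE u v : u \in I -> v \in I -> phi_adj e I u v = (N u != N v).
Proof.
move=> uI vI; apply/idP/idP.
  move=> /and4P[_ _ uv /card_gt0P[X]]; rewrite inE => /and3P[P4X uX vX].
  have [u' [v' [u'I v'I neq EI _]]] := F1 P4X.
  have uin : u \in [set u'; v'] by rewrite -EI inE uX uI.
  have vin : v \in [set u'; v'] by rewrite -EI inE vX vI.
  move: uin vin uv => /set2P[]-> /set2P[]->; rewrite ?eqxx // => _.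
  by rewrite eq_sym.
move=> neq; have uv : u != v by apply: contraNneq neq => ->.
rewrite /phi_adj uI vI uv /=; apply/card_gt0P; exists (R [set u; v]).
have [P4 EI] := F2 uI vI neq.
have : u \in R [set u; v] :&: I by rewrite EI set21.
have : v \in R [set u; v] :&: I by rewrite EI set22.
by rewrite !in_setI => /andP[vR _] /andP[uR _]; rewrite inE P4 uR vR.
Qed.

Lemma Rfix X : induces_P4 e X -> X = R (X :&: I).
Proof. by move/F1 => [u [v [_ _ _ -> ->]]]. Qed.

Lemma pair_eq (a b c d : T) : a != b -> [set a; b] = [set c; d] ->
  (a = c /\ b = d) \/ (a = d /\ b = c).
Proof.
move=> ab E.
have ain : a \in [set c; d] by rewrite -E set21.
have bin : b \in [set c; d] by rewrite -E set22.
move: ain bin ab => /set2P[]-> /set2P[]->; rewrite ?eqxx //; auto.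
Qed.


Lemma main_res : [/\ #|K| <= #|I|,
      clique_number e [set: T] = clique_number (phi_adj e I) I,
      (phi_complete e I -> degS e = 'C(#|I|, 2)) &
      (~ phi_complete e I ->
         uphalf (#|I| * (#|K| - 1)) <= degS e < 'C(#|I|, 2))].
Proof.
have [g [gK gN gS]] := cls.
pose f x := odflt x [pick u in I | g u == x].
have fP x : x \in K -> f x \in I /\ g (f x) = x.
  move=> xK; have [u [uI gu]] := gS x xK; rewrite /f.
  case: pickP => [w /andP[wI /eqP gw] | /(_ u)] //=.
  by rewrite uI gu eqxx.
have finj : {in K &, injective f}.
  by move=> x y xK yK E; rewrite -(fP x xK).2 E (fP y yK).2.
have card_fK : #|f @: K| = #|K| := card_in_imset finj.
have fKI : f @: K \subset I.
  by apply/subsetP=> u /imsetP[x xK ->]; exact: (fP x xK).1.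
have NgE u v : u \in I -> v \in I -> (N u != N v) = (g u != g v).
  by move=> uI vI; rewrite gN.
have H1 : #|K| <= #|I| by rewrite -card_fK subset_leq_card.
have cS : clique_number e [set: T] = #|K|.
  apply/anti_leq/andP; split.
    apply/bigmax_leqP => A /andP[_ /forall_inP cl].
    have clA x y : x \in A -> y \in A -> x != y -> e x y.
      by move=> xA yA; move: (cl x xA) => /forall_inP/(_ y yA)/implyP.
    case: (boolP [exists u in A, u \in I]) => [/exists_inP[u uA uI]|/exists_inPn nI].
      have sub : A :\ u \subset N u.
        apply/subsetP=> z; rewrite in_setD1 => /andP[zu zA]; rewrite inE.
        have ez : e u z by apply: clA; rewrite // eq_sym.
        rewrite ez andbT -[z \in K]negbK -inIE; apply/negP=> zI.
        by move: (Iind uI zI); rewrite ez.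
      have [y [yK yu]] := actI uI.
      have sub2 : N u \subset K :\ y.
        apply/subsetP=> z zu; rewrite in_setD1 (NK zu) andbT.
        by apply: contraNneq yu => <-.
      rewrite (cardsD1 u A) uA (cardsD1 y K) yK /= !add1n ltnS.
      exact: leq_trans (subset_leq_card sub) (subset_leq_card sub2).
    apply: subset_leq_card; apply/subsetP=> z zA.
    by rewrite -[z \in K]negbK -inIE; exact: nI.
  apply: leq_bigmax_cond; rewrite subsetT /=.
  apply/forall_inP=> x xK; apply/forall_inP=> y yK; apply/implyP; exact: Kcl.
have cP : clique_number (phi_adj e I) I = #|K|.
  apply/anti_leq/andP; split.
    apply/bigmax_leqP => A /andP[sAI /forall_inP cl].
    have clA x y : x \in A -> y \in A -> x != y -> phi_adj e I x y.
      by move=> xA yA; move: (cl x xA) => /forall_inP/(_ y yA)/implyP.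
    have ginj : {in A &, injective g}.
      move=> u v uA vA E; case: (eqVneq u v) => // uv.
      have := clA u v uA vA uv.
      by rewrite adjE ?(subsetP sAI) // NgE ?(subsetP sAI) // E eqxx.
    rewrite -(card_in_imset ginj); apply: subset_leq_card.
    by apply/subsetP=> x /imsetP[u uA ->]; apply: gK; apply: (subsetP sAI).
  rewrite -card_fK; apply: leq_bigmax_cond; rewrite fKI /=.
  apply/forall_inP=> u /imsetP[a aK ->]; apply/forall_inP=> v /imsetP[b bK ->].
  apply/implyP => fab.
  have [faI gfa] := fP a aK; have [fbI gfb] := fP b bK.
  rewrite adjE // NgE // gfa gfb.
  by apply: contra_neq fab => ->.
set P4s := [set X : {set T} | induces_P4 e X].
have degE : degS e = #|P4s| by [].
set Pairs := [set P : {set T} | P \subset I & #|P| == 2].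
have cPairs : #|Pairs| = 'C(#|I|, 2) by rewrite cards_draws.
have hinj : {in P4s &, injective (fun X => X :&: I)}.
  by move=> X Y; rewrite !inE => PX PY E; rewrite (Rfix PX) (Rfix PY) E.
have degE2 : degS e = #|[set X :&: I | X in P4s]| by rewrite degE card_in_imset.
have himg : [set X :&: I | X in P4s] \subset Pairs.
  apply/subsetP=> P /imsetP[X]; rewrite inE => PX ->.
  have [u [v [uI vI neq EI _]]] := F1 PX.
  rewrite EI inE cards2.
  have uv : u != v by apply: contraNneq neq => ->.
  rewrite uv eqxx andbT; apply/subsetP=> z /set2P[]->//.
split.
- exact: H1.
- by rewrite cS cP.
- move=> comp; rewrite degE2 -cPairs; apply/eqP; rewrite eqn_leq subset_leq_card //=.
  apply: subset_leq_card; apply/subsetP=> P; rewrite inE => /andP[sPI /cards2P[u [v [uv EP]]]].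
  have uI : u \in I by apply: (subsetP sPI); rewrite EP set21.
  have vI : v \in I by apply: (subsetP sPI); rewrite EP set22.
  have := comp u v uI vI uv; rewrite adjE // => neq.
  have [P4 EI] := F2 uI vI neq.
  by apply/imsetP; exists (R [set u; v]); rewrite ?inE // EI EP.
move=> ncomp.
have : ~~ [forall u in I, forall v in I, (u != v) ==> phi_adj e I u v].
  apply/negP => /forall_inP H; apply: ncomp => u v uI vI uv.
  by move: (H u uI) => /forall_inP/(_ v vI)/implyP; apply.
move=> /forall_inPn [u uI /forall_inPn [v vI]]; rewrite negb_imply => /andP[uv nadj].
rewrite adjE // negbK in nadj; move/eqP: nadj => Nuv.
apply/andP; split; last first.
  rewrite degE2 -cPairs; apply: proper_card; apply/properP; split => //.
  exists [set u; v]; first by rewrite inE cards2 uv eqxx andbT; apply/subsetP=> z /set2P[]->.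
  apply/imsetP => [[X]]; rewrite inE => PX EX.
  have [u' [v' [u'I v'I neq EI _]]] := F1 PX.
  rewrite EI in EX.
  by case: (pair_eq uv EX) => [[Eu Ev]|[Eu Ev]]; move: neq; rewrite -Eu -Ev Nuv eqxx.
set B := [set (u, g u) | u in I].
set W := setX I K :\: B.
have sB : B \subset setX I K.
  by apply/subsetP=> p /imsetP[w wI ->]; rewrite in_setX wI gK.
have cB : #|B| = #|I| by rewrite card_in_imset // => a b _ _ [].
have cW : #|W| = #|I| * #|K| - #|I| by rewrite cardsD (setIidPr sB) cardsX cB.
have Wfacts p : p \in W -> [/\ p.1 \in I, p.2 \in K & p.2 != g p.1].
  case: p => a x; rewrite in_setD in_setX /= => /andP[nB /andP[aI xK]].
  split => //; apply: contraNneq nB => ->; apply/imsetP; by exists a.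
pose Fm (p : T * T) := (R [set p.1; f p.2], enum_rank p.1 < enum_rank (f p.2)).
have Fm_info p : p \in W -> [/\ f p.2 \in I, p.1 != f p.2, induces_P4 e (R [set p.1; f p.2])
    & R [set p.1; f p.2] :&: I = [set p.1; f p.2]].
  move=> /Wfacts [aI xK xg]; have [fI gf] := fP _ xK.
  have neq : N p.1 != N (f p.2) by rewrite NgE // gf eq_sym.
  have [P4 EI] := F2 aI fI neq.
  by split => //; apply: contraNneq neq => ->.
have Fminj : {in W &, injective Fm}.
  move=> p q pW qW; have [fpI pf P4p EIp] := Fm_info p pW; have [fqI qf P4q EIq] := Fm_info q qW.
  have [_ xK _] := Wfacts p pW; have [_ yK _] := Wfacts q qW.
  case: p q pW qW fpI pf P4p EIp fqI qf P4q EIq xK yK => a x [b y] /= pW qW fpI pf P4p EIp fqI qf P4q EIq xK yK.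
  rewrite /Fm /= => [[ER Eb]].
  have Epair : [set a; f x] = [set b; f y] by rewrite -EIp -EIq ER.
  case: (pair_eq pf Epair) => [[<- Ef]|[Ea Eb']].
    by rewrite -(fP x xK).2 Ef (fP y yK).2.
  move: Eb; rewrite Ea -Eb'.
  case: (ltngtP (enum_rank (f y)) (enum_rank (f x))) => // /ord_inj/enum_rank_inj E.
  by move: pf; rewrite Ea E eqxx.
have FmW : [set Fm p | p in W] \subset setX P4s [set: bool].
  apply/subsetP=> z /imsetP[p pW ->]; have [_ _ P4 _] := Fm_info p pW.
  by rewrite in_setX inE P4 in_setT.
have := subset_leq_card FmW; rewrite card_in_imset // cW cardsX cardsT card_bool -degE.
move=> hle; rewrite leq_uphalf_double -muln2 mulnBr muln1.
exact: hle.
Qed.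

End Main.

Unset Implicit Arguments.

Theorem corollary5p3 (T : finType) (e : rel T) (K I : {set T}) :
  simple_graph e ->
  split_bipartition e K I ->
  active_graph e ->
  phi_simple e I ->
  phi_connected e I ->
  [/\ #|K| <= #|I|,
      clique_number e [set: T] = clique_number (phi_adj e I) I,
      (phi_complete e I -> degS e = 'C(#|I|, 2)) &
      (~ phi_complete e I ->
         uphalf (#|I| * (#|K| - 1)) <= degS e < 'C(#|I|, 2))].
Proof.
move=> [esy eirr] [KI0 KIT Kcl Iind] act simp conn.
by apply: main_res.
Qed.
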